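(* For any CQAP $Q$ whose fracture $Q_\dagger$ is hierarchical, with static width $\mathsf w=\mathsf w(Q)$ and dynamic width $\delta=\delta(Q)$, either $\delta=\mathsf w$ or $\delta=\mathsf w-1$.
   Context: CQAP. A conjunctive query with free access patterns (CQAP) has the form $Q(\mathcal O\mid\mathcal I)=R_1(\mathcal X_1),\dots,R_n(\mathcal X_n)$, where $R_i(\mathcal X_i)$ are atoms, $\mathit{vars}(Q)=\bigcup_i\mathcal X_i$, and the free variables $\mathcal O\cup\mathcal I\subseteq\mathit{vars}(Q)$ are partitioned into input variables $\mathcal I$ and output variables $\mathcal O$ (either may be empty); the other variables are bound. $\mathit{atoms}(X)$ denotes the set of atoms whose schema contains $X$. A CQAP is hierarchical if for all variables $A,B$: $\mathit{atoms}(A)\subseteq\mathit{atoms}(B)$, or $\mathit{atoms}(B)\subseteq\mathit{atoms}(A)$, or $\mathit{atoms}(A)\cap\mathit{atoms}(B)=\emptyset$. Fracture. The fracture $Q_\dagger$ of $Q$ is obtained by: replacing every occurrence of an input variable in every atom by a distinct fresh variable; computing the connected components of the hypergraph of the resulting query (vertices = variables, hyperedges = atom schemas); within each connected component, replacing all fresh variables originating from the same input variable of $Q$ by one fresh input variable. Output and bound variables are unchanged. Variable orders. A variable order (VO) $\omega$ for a CQAP is a rooted forest with exactly one node per variable such that the variables of each atom lie on a common root-to-leaf path; $\mathit{dep}_\omega(X)$ is the set of ancestors $Y$ of $X$ that occur in a common atom with some variable of the subtree rooted at $X$. The extended VO adds leaves: each atom becomes a child of its lowest variable; then, processing variables bottom-up,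 at each variable $X$ with $\mathcal S=\{X\}\cup\mathit{dep}_\omega(X)$ and $\mathcal R$ the set of atoms below $X$, consider candidate indicator atoms $I_{\mathcal Z}R(\mathcal Z)$ for atoms $R(\mathcal Y)$ not in $\mathcal R$ with $\mathcal Z=\mathcal Y\cap\mathcal S\neq\emptyset$; run the GYO reduction (repeatedly delete a vertex occurring in only one hyperedge and a hyperedge contained in another) on the hypergraph whose hyperedges are the schemas of the candidates and of $\mathcal R$, and add as children of $X$ those candidates whose hyperedges survive in the fixpoint. All VOs are extended. A VO is access-top if no bound variable is an ancestor of a free variable and no output variable is an ancestor of an input variable. Widths. For a VO $\omega$ and variable $X$, $\omega_X$ is the subtree rooted at $X$ and $Q_X$ the join of all atoms and indicator atoms at the leaves of $\omega_X$. For a variable set $\mathcal F$, $\rho^*_{Q_X}(\mathcal F)$ is the minimum of $\sum_e\lambda_e$ over $\lambda_e\in[0,1]$ indexed by atoms $e$ of $Q_X$ subject to $\sum_{e\ni Y}\lambda_e\ge1$ for all $Y\in\mathcal F$ (so $\rho^*(\emptyset)=0$). $\mathsf w(\omega)=\max_X\rho^*_{Q_X}(\{X\}\cup\mathit{dep}_\omega(X))$ and $\delta(\omega)=\max_X\max_{R(\mathcal Y)}\rho^*_{Q_X}((\{X\}\cup\mathit{dep}_\omega(X))\setminus\mathcal Y)$, the inner maximum over atoms and indicator atoms $R(\mathcal Y)$ at leaves of $\omega_X$. For a CQAP $Q$, $(\delta(Q),\mathsf w(Q))$ is the lexicographically smallest pair $(\delta(\omega),\mathsf w(\omega))$ (first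 minimise $\delta$, then $\mathsf w$) over all access-top VOs $\omega$ of $Q_\dagger$. *)

(* Defs.v *)
From HB Require Import structures.
From mathcomp Require Import all_boot all_order all_algebra.
From mathcomp Require Import reals.

Set Implicit Arguments.
Unset Strict Implicit.
Unset Printing Implicit Defensive.

Import Order.TTheory GRing.Theory Num.Theory.
Local Open Scope ring_scope.

(* CQAPs.  A CQAP Q(O|I) = R_1(X_1),...,R_n(X_n) is given by           *)
(*  - a finite type V of variable names and a finite type A indexing   *)
(*    the atoms,                                                       *)
(*  - sch : A -> {set V}, the schema X_i of each atom,                 *)
(*  - kind : V -> vkind, saying whether a variable is an input, an     *)
(*    output or a bound variable.                                      *)
(* vars(Q) is the union of the schemas (qvars).  Names of relation     *)
(* symbols play no role in any notion used below, so atoms are just    *)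
(* indices with a schema.                                              *)

Inductive vkind := Inp | Out | Bnd.

Definition isInp (k : vkind) : bool := if k is Inp then true else false.
Definition isOut (k : vkind) : bool := if k is Out then true else false.
Definition isBnd (k : vkind) : bool := if k is Bnd then true else false.
Definition isFree (k : vkind) : bool := ~~ isBnd k.

Definition qvars (V A : finType) (sch : A -> {set V}) : {set V} :=
  \bigcup_(a : A) sch a.

Definition atoms_of (V A : finType) (sch : A -> {set V}) (x : V) : {set A} :=
  [set a | x \in sch a].

Definition hierarchical (V A : finType) (sch : A -> {set V}) : Prop :=
  forall x y : V,
    atoms_of sch x \subset atoms_of sch y \/
    atoms_of sch y \subset atoms_of sch x \/
    [disjoint atoms_of sch x & atoms_of sch y].

(* Fracture.  After replacing every occurrence of an input variable by *)
(* a fresh variable, two atoms are in the same connected component iff *)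
(* they are linked by a chain of atoms sharing non-input variables.    *)
(* The fresh variables of input x in the component C (a set of atoms)  *)
(* are merged into the variable (x, C); a non-input variable x is      *)
(* renamed (x, set0).  Variables of the fracture live in V * {set A}.  *)

Definition fr_adj (V A : finType) (sch : A -> {set V}) (kind : V -> vkind)
  : rel A :=
  fun a b => [exists x : V, [&& ~~ isInp (kind x), x \in sch a & x \in sch b]].

Definition fr_comp (V A : finType) (sch : A -> {set V}) (kind : V -> vkind)
  (a : A) : {set A} :=
  [set b | connect (fr_adj sch kind) a b].

Definition fr_sch (V A : finType) (sch : A -> {set V}) (kind : V -> vkind)
  (a : A) : {set (V * {set A})} :=
  [set (x, if isInp (kind x) then fr_comp sch kind a else set0) | x in sch a].

Definition fr_kind (V A : finType) (kind : V -> vkind) (p : V * {set A})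
  : vkind := kind p.1.

(* Variable orders, as parent functions par : V -> option V.           *)

Definition up (V : Type) (par : V -> option V) (n : nat) (x : V) : option V :=
  iter n (fun o => obind par o) (Some x).

Definition anc (V : finType) (par : V -> option V) (y x : V) : bool :=
  [exists n : 'I_#|V|.+1, (0 < n)%N && (up par n x == Some y)].

Definition ancs (V : finType) (par : V -> option V) (y x : V) : bool :=
  (y == x) || anc par y x.

(* par is a rooted forest with exactly one node per variable of Q whose *)
(* atoms' variables lie on root-to-leaf paths (i.e. are pairwise        *)
(* comparable w.r.t. the ancestor relation).                           *)
Definition is_VO (V A : finType) (sch : A -> {set V}) (par : V -> option V)
  : Prop :=
  [/\ (forall x, x \notin qvars sch -> par x = None),
      (forall x y, par x = Some y -> y \in qvars sch),
      (forall x, up par #|V| x = None) &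
      (forall a x y, x \in sch a -> y \in sch a ->
          [\/ x = y, anc par x y | anc par y x])].

Definition access_top (V : finType) (kind : V -> vkind) (par : V -> option V)
  : Prop :=
  forall x y, anc par y x ->
    (isBnd (kind y) -> ~~ isFree (kind x)) /\
    (isOut (kind y) -> ~~ isInp (kind x)).

Definition dep (V A : finType) (sch : A -> {set V}) (par : V -> option V)
  (X : V) : {set V} :=
  [set Y | anc par Y X &&
     [exists a, (Y \in sch a) && [exists Z in sch a, ancs par X Z]]].

Definition lowest (V A : finType) (sch : A -> {set V}) (par : V -> option V)
  (a : A) (x : V) : bool :=
  (x \in sch a) && [forall y in sch a, ancs par y x].

(* atom a is a leaf of omega_X (it is a child of its lowest variable) *)
Definition below (V A : finType) (sch : A -> {set V}) (par : V -> option V)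
  (X : V) (a : A) : bool :=
  [exists x, lowest sch par a x && ancs par X x].

(* GYO reduction on an indexed list of hyperedges (None = deleted).    *)
(* A vertex step deletes all vertices occurring in exactly one edge    *)
(* (these deletions do not interfere); an edge step deletes the first  *)
(* edge contained in another live edge (ties between equal edges:      *)
(* the one with larger index is deleted).                              *)

Definition gyo_cnt (V : finType) (st : seq (option {set V})) (v : V) : nat :=
  count (fun o : option {set V} => if o is Some e then v \in e else false) st.

Definition gyo_vstep (V : finType) (st : seq (option {set V}))
  : seq (option {set V}) :=
  map (omap (fun e : {set V} => [set v in e | gyo_cnt st v != 1%N])) st.

Definition gyo_removable (V : finType) (st : seq (option {set V})) (i : nat)
  : bool :=
  if nth (None : option {set V}) st i is Some e then
    has (fun j => (j != i) &&
           (if nth (None : option {set V}) st j is Some f then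
              (e \subset f) && ((e != f) || (j < i)%N)
            else false)) (iota 0 (size st))
  else false.

Fixpoint gyo (V : finType) (fuel : nat) (st : seq (option {set V}))
  : seq (option {set V}) :=
  if fuel is n.+1 then
    let st1 := gyo_vstep st in
    let i := find (gyo_removable st1) (iota 0 (size st1)) in
    if (i < size st1)%N then gyo n (set_nth None st1 i None) else st1
  else st.

Definition gyo_fix (V : finType) (es : seq {set V}) : seq (option {set V}) :=
  gyo (size es).+1 (map Some es).

(* Among the candidate hyperedges cands (appended after the hyperedges   *)
(* Rl of the leaves below X), keep those whose hyperedge survives in the *)
(* GYO fixpoint (present and non-empty); return their schemas.          *)
Definition gyo_select (V : finType) (Rl cands : seq {set V}) : seq {set V} :=
  let fin := drop (size Rl) (gyo_fix (Rl ++ cands)) in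
  [seq p.1 | p <- zip cands fin &
     (if p.2 is Some e then e != set0 else false)].

(* Candidate indicator schemas Z = Y cap S at X, for atoms R(Y) not     *)
(* below X with Z nonempty.                                             *)
Definition cands (V A : finType) (sch : A -> {set V}) (par : V -> option V)
  (X : V) (S : {set V}) : seq {set V} :=
  [seq sch a :&: S | a <- enum A & ~~ below sch par X a && (sch a :&: S != set0)].

(* Indicator atoms added as children of X, computed bottom-up: the set   *)
(* R of leaves below X consists of the atoms below X and the indicator   *)
(* atoms already added at strict descendants of X.                      *)
Fixpoint ind (V A : finType) (sch : A -> {set V}) (par : V -> option V)
  (fuel : nat) (X : V) : seq {set V} :=
  if fuel is n.+1 then
    let S := X |: dep sch par X in
    let Rl := [seq sch a | a <- enum A & below sch par X a] ++
              flatten [seq ind sch par n Y | Y <- enum V & anc par X Y] in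
    gyo_select Rl (cands sch par X S)
  else [::].

(* Schemas of the atoms and indicator atoms at the leaves of omega_X *)
Definition QX (V A : finType) (sch : A -> {set V}) (par : V -> option V)
  (X : V) : seq {set V} :=
  [seq sch a | a <- enum A & below sch par X a] ++
  flatten [seq ind sch par #|V| Y | Y <- enum V & ancs par X Y].

Definition rho_star (R : realType) (V : finType) (E : seq {set V})
  (F : {set V}) : R :=
  reals.inf (fun r : R => exists lam : nat -> R,
        [/\ (forall i, (i < size E)%N -> 0 <= lam i <= 1),
            (forall Y, Y \in F ->
               1 <= \sum_(i < size E | Y \in nth set0 E i) lam i) &
            r = \sum_(i < size E) lam i]).

Definition wVO (R : realType) (V A : finType) (sch : A -> {set V})
  (par : V -> option V) : R :=
  \big[Num.max/0]_(X in qvars sch)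
     rho_star R (QX sch par X) (X |: dep sch par X).

Definition deltaVO (R : realType) (V A : finType) (sch : A -> {set V})
  (par : V -> option V) : R :=
  \big[Num.max/0]_(X in qvars sch)
    \big[Num.max/0]_(e <- QX sch par X)
       rho_star R (QX sch par X) ((X |: dep sch par X) :\: e).

(* (d, w) = (delta(Q), w(Q)): the lexicographically smallest pair        *)
(* (delta(omega), w(omega)) over access-top VOs omega of the fracture.  *)
Definition cqap_widths (R : realType) (V A : finType) (sch : A -> {set V})
  (kind : V -> vkind) (d w : R) : Prop :=
  let sch' := fr_sch sch kind in
  let kind' := @fr_kind V A kind in
  (exists par, [/\ is_VO sch' par, access_top kind' par,
                   deltaVO R sch' par = d & wVO R sch' par = w]) /\
  (forall par, is_VO sch' par -> access_top kind' par ->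
     d < deltaVO R sch' par \/ (d = deltaVO R sch' par /\ w <= wVO R sch' par)).

(* Main.v *)
Require Import Defs.
From HB Require Import structures.
From mathcomp Require Import all_boot all_order all_algebra.
From mathcomp Require Import reals.
From mathcomp Require Import zify.
Import Order.TTheory GRing.Theory Num.Theory.
Set Implicit Arguments.
Unset Strict Implicit.
Unset Printing Implicit Defensive.
Lemma up_None (V : Type) (par : V -> option V) n :
  iter n (fun o => obind par o) None = None.
Proof. by elim: n => //= n ->. Qed.

Lemma upD (V : Type) (par : V -> option V) n m x :
  up par (m + n) x = if up par n x is Some y then up par m y else None.
Proof.
rewrite /up iterD; case: (iter n _ _) => [y|] //; exact: up_None.
Qed.

Lemma up_ge (V : finType) (par : V -> option V) x k :
  (forall x, up par #|V| x = None) -> (#|V| <= k)%N -> up par k x = None.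
Proof.
move=> H Hk; rewrite -(subnK Hk) upD H //.
Qed.

Lemma ancP (V : finType) (par : V -> option V) y x :
  (forall x, up par #|V| x = None) ->
  reflect (exists n, (0 < n)%N /\ up par n x = Some y) (anc par y x).
Proof.
move=> Hac; apply: (iffP existsP).
  by case=> n /andP[n0 /eqP h]; exists n.
case=> n [n0 h]; have hn : (n < #|V|.+1)%N.
  rewrite ltnS leqNgt; apply/negP => hlt.
  by rewrite up_ge // in h; apply: ltnW.
by exists (Ordinal hn); rewrite /= n0 h eqxx.
Qed.

Lemma anc_trans (V : finType) (par : V -> option V) x y z :
  (forall x, up par #|V| x = None) ->
  anc par y x -> anc par z y -> anc par z x.
Proof.
move=> Hac /(ancP _ _ Hac) [n [n0 hn]] /(ancP _ _ Hac) [m [m0 hm]].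
apply/(ancP _ _ Hac); exists (m + n); split; first by rewrite addn_gt0 m0.
by rewrite upD hn.
Qed.

Lemma anc_irr (V : finType) (par : V -> option V) x :
  (forall x, up par #|V| x = None) -> ~~ anc par x x.
Proof.
move=> Hac; apply/negP => /(ancP _ _ Hac) [n [n0 hn]].
have hk : forall k, up par (n * k) x = Some x.
  elim=> [|k IH]; first by rewrite muln0.
  by rewrite mulnS upD IH.
by move: (hk #|V|); rewrite up_ge // leq_pmull.
Qed.

Lemma ancs_trans (V : finType) (par : V -> option V) x y z :
  (forall x, up par #|V| x = None) ->
  ancs par y x -> ancs par z y -> ancs par z x.
Proof.
move=> Hac /orP[/eqP->|h1] /orP[/eqP->|h2]; rewrite /ancs ?eqxx ?h1 ?h2 ?orbT //.
by rewrite (anc_trans Hac h1 h2) orbT.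
Qed.
Lemma lowest_ex (V A : finType) (sch : A -> {set V}) (par : V -> option V) a x :
  is_VO sch par -> x \in sch a -> exists L, lowest sch par a L.
Proof.
case=> _ _ Hac Hch xa.
case: (@arg_maxnP _ x (mem (sch a)) (fun L => #|[set y | anc par y L]|) xa)
  => L La Lmax.
exists L; rewrite /lowest; have -> : L \in sch a by []; rewrite /=; apply/forallP => y; apply/implyP => ya.
case: (Hch a y L ya La) => [->|h|h]; rewrite /ancs ?eqxx ?h ?orbT //.
exfalso; have := Lmax y ya; apply/negP; rewrite -ltnNge.
apply: proper_card; apply/properP; split.
  apply/subsetP => z; rewrite !inE => hz; exact: (anc_trans Hac h hz).
by exists L; rewrite !inE ?h // (negbTE (anc_irr _ Hac)).
Qed.

Lemma below_of (V A : finType) (sch : A -> {set V}) (par : V -> option V) X Z b :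
  is_VO sch par -> Z \in sch b -> ancs par X Z -> below sch par X b.
Proof.
move=> hVO Zb XZ; have [L hL] := lowest_ex hVO Zb.
apply/existsP; exists L; rewrite hL /=.
have Hac : forall x, up par #|V| x = None by case: hVO.
move: hL => /andP[_ /forallP/(_ Z)]; rewrite Zb /= => ZL.
exact: (ancs_trans Hac ZL XZ).
Qed.
Lemma cand_cover (V A : finType) (sch : A -> {set V}) (par : V -> option V) X a :
  hierarchical sch -> is_VO sch par -> ~~ below sch par X a ->
  sch a :&: (X |: dep sch par X) != set0 ->
  exists b, below sch par X b /\ sch a :&: (X |: dep sch par X) \subset sch b.
Proof.
set S := X |: dep sch par X => Hh hVO nb /set0Pn [q0 q0c].
case: (@arg_minnP _ q0 (mem (sch a :&: S)) (fun q => #|atoms_of sch q|) q0c)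
  => q qc qmin.
have /setIP[qa qS] : q \in sch a :&: S by [].
have qX : q != X.
  apply/eqP => eqX; move/negP: nb; apply; apply: (below_of hVO qa).
  by rewrite eqX /ancs eqxx.
move: qS; rewrite /S in_setU1 (negbTE qX) /= inE => /andP[_ /existsP [b /andP[qb /existsP[Z /andP[Zb XZ]]]]].
exists b; split; first exact: (below_of hVO Zb XZ).
apply/subsetP => y yc.
have /setIP[ya _] : y \in sch a :&: S by [].
have : atoms_of sch q \subset atoms_of sch y.
  case: (Hh q y) => [//|[h|h]].
  - have := qmin y yc => hle.
    have /eqP -> // : atoms_of sch y == atoms_of sch q.
    by rewrite eqEcard h hle.
  - by move: h; rewrite -setI_eq0 => /eqP/setP/(_ a); rewrite !inE qa ya.
by move/subsetP/(_ b); rewrite !inE; apply.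
Qed.
Definition Kinv (V : finType) (p : nat) (st : seq (option {set V})) : Prop :=
  forall i e, (p <= i)%N -> nth None st i = Some e ->
    exists j f, [/\ (j < i)%N, nth None st j = Some f & e \subset f].

Lemma nth_map_omap (V : finType) (g : {set V} -> {set V}) (s : seq (option {set V})) i :
  nth None (map (omap g) s) i = omap g (nth None s i).
Proof. by elim: s i => [|o s IH] [|i] //=. Qed.

Lemma vstep_K (V : finType) p (st : seq (option {set V})) :
  Kinv p st -> Kinv p (gyo_vstep st).
Proof.
move=> HK i e pi; rewrite /gyo_vstep nth_map_omap.
case h: (nth None st i) => [e0|] //= [<-].
have [j [f [ji hj sub]]] := HK i e0 pi h.
exists j, [set v in f | gyo_cnt st v != 1%N]; split => //.
  by rewrite nth_map_omap hj.
apply/subsetP => v; rewrite !inE => /andP[ve ->]; rewrite andbT.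
exact: (subsetP sub).
Qed.

Lemma count_vstep (V : finType) (st : seq (option {set V})) :
  count isSome (gyo_vstep st) = count isSome st.
Proof. by rewrite /gyo_vstep count_map; apply: eq_count => -[]. Qed.

Lemma count_set_nth (V : finType) (s : seq (option {set V})) k e :
  nth None s k = Some e -> (count isSome (set_nth None s k None)).+1 = count isSome s.
Proof.
elim: s k => [|o s IH] [|k] //=.
  by move=> ->.
by move=> /IH <-; rewrite addnS.
Qed.

Lemma nth_Some_size (V : finType) (s : seq (option {set V})) i e :
  nth None s i = Some e -> (i < size s)%N.
Proof. by move=> h; rewrite ltnNge; apply/negP => /(nth_default None); rewrite h. Qed.

Lemma terminal_K (V : finType) p (st : seq (option {set V})) :
  Kinv p st -> ~~ (find (gyo_removable st) (iota 0 (size st)) < size st)%N ->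
  forall i, (p <= i)%N -> nth None st i = None.
Proof.
move=> HK hf i pi; case h: (nth None st i) => [e|] //; exfalso.
move: hf; rewrite -{2}(size_iota 0 (size st)) -has_find => /hasP; apply.
exists i; first by rewrite mem_iota add0n (nth_Some_size h).
have [j [f [ji hj sub]]] := HK i e pi h.
rewrite /gyo_removable h; apply/hasP; exists j.
  by rewrite mem_iota add0n (nth_Some_size hj).
by rewrite hj sub ji orbT (ltn_eqF ji).
Qed.

Lemma removal_K (V : finType) p (st : seq (option {set V})) k :
  Kinv p st -> gyo_removable st k -> Kinv p (set_nth None st k None).
Proof.
move=> HK rk i e pi; rewrite nth_set_nth /=.
case: eqP => [//|/eqP ik] hi.
have [j [f [ji hj sub]]] := HK i e pi hi.
suff [m [h [mi mk hm sub2]]] : exists m h, [/\ (m < i)%N, m != k, nth None st m = Some h & e \subset h].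
  by exists m, h; rewrite nth_set_nth /= (negbTE mk).
case: (eqVneq j k) => [ejk|njk]; last by exists j, f.
subst j; move: rk; rewrite /gyo_removable hj => /hasP [l _ /andP [lk]].
case hl: (nth None st l) => [g|] // /andP [fg hfg].
case: (ltngtP l i) => [li|il|eli].
- by exists l, g; split => //; apply: subset_trans fg.
- have pfg : f \proper g.
    move: hfg; rewrite ltnNge (ltnW (ltn_trans ji il)) orbF => nfg.
    by rewrite properEneq nfg fg.
  elim/ltn_ind: l g il hl pfg {lk fg hfg} => l IH g il hl pfg.
  have [m [h [ml hm sub2]]] := HK l g (leq_trans pi (ltnW il)) hl.
  have pfh : f \proper h by apply: (proper_sub_trans pfg).
  case: (ltngtP m i) => [mi|im|emi].
  + exists m, h; split => //; last by apply: subset_trans sub (proper_sub pfh).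
    by apply/eqP => emk; move: pfh; rewrite emk hj in hm; case: hm => ->; rewrite properxx.
  + exact: (IH m ml h im hm pfh).
  + by move: hm; rewrite emi hi => -[eh]; move: pfh; rewrite properE -eh sub andbF.
- subst l; move: hl; rewrite hi => -[eg]; subst g.
  have efe : f = e by apply/eqP; rewrite eqEsubset fg sub.
  by move: hfg; rewrite efe eqxx /= ltnNge (ltnW ji).
Qed.

Lemma gyo_K (V : finType) p fuel (st : seq (option {set V})) :
  Kinv p st -> (count isSome st < fuel)%N ->
  forall i, (p <= i)%N -> nth None (gyo fuel st) i = None.
Proof.
elim: fuel st => [|n IH] st HK hc //=.
set st1 := gyo_vstep st.
have HK1 : Kinv p st1 by apply: vstep_K.
case: ifP => hf; last by apply: terminal_K => //; rewrite hf.
set k := find _ _.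
have rk : gyo_removable st1 k.
  have hh : has (gyo_removable st1) (iota 0 (size st1)) by rewrite has_find size_iota.
  by have := nth_find 0 hh; rewrite -/k nth_iota.
have [e he] : exists e, nth None st1 k = Some e.
  by move: rk; rewrite /gyo_removable; case: (nth None st1 k) => // e _; exists e.
apply: IH; first exact: removal_K.
by rewrite -ltnS (count_set_nth he) count_vstep.
Qed.
Lemma sel_nil (V : finType) (c : seq {set V}) (s : seq (option {set V})) :
  (forall o, o \in s -> o = None) ->
  [seq p.1 | p <- zip c s & (if p.2 is Some e then e != set0 else false)] = [::].
Proof.
elim: c s => [|x c IH] [|o s] //= H.
rewrite (H o (mem_head _ _)) /=; apply: IH => o' h; apply: H.
by rewrite in_cons h orbT.
Qed.

Lemma nth_mapSome (V : finType) (s : seq {set V}) i :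
  nth None (map Some s) i = if (i < size s)%N then Some (nth set0 s i) else None.
Proof.
case: ltnP => h; first by rewrite (nth_map set0).
by rewrite nth_default // size_map.
Qed.

Lemma ind_nil (V A : finType) (sch : A -> {set V}) (par : V -> option V) n X :
  hierarchical sch -> is_VO sch par -> ind sch par n X = [::].
Proof.
move=> Hh hVO; case: n => [|n] //=.
set S := X |: dep sch par X.
set Rl := _ ++ _.
set c := cands sch par X S.
rewrite /gyo_select; apply: sel_nil => o.
have HK : Kinv (size Rl) (map Some (Rl ++ c)).
  move=> i e pi; rewrite nth_mapSome; case: ifP => // isz [<-].
  rewrite nth_cat ltnNge pi /=.
  have : nth set0 c (i - size Rl) \in c.
    by apply: mem_nth; rewrite size_cat in isz; rewrite ltn_subLR.
  rewrite /c /cands => /mapP [a]; rewrite mem_filter => /andP [/andP [nb ne] _] ->.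
  have [b [bb sub]] := cand_cover Hh hVO nb ne.
  have bRl : sch b \in Rl.
    by rewrite mem_cat; apply/orP; left; apply: map_f; rewrite mem_filter bb mem_enum.
  exists (index (sch b) Rl), (sch b); split => //.
    by apply: leq_trans pi; rewrite index_mem.
  have hi : (index (sch b) Rl < size Rl)%N by rewrite index_mem.
  by rewrite nth_mapSome size_cat (ltn_addr _ hi) nth_cat hi nth_index.
move=> /(nthP None) [t]; rewrite size_drop => ht <-.
rewrite nth_drop /gyo_fix; apply: (@gyo_K _ (size Rl)) => //; last exact: leq_addr.
by rewrite count_map (@eq_count _ _ predT) // count_predT size_map.
Qed.
Lemma QX_eq (V A : finType) (sch : A -> {set V}) (par : V -> option V) X :
  hierarchical sch -> is_VO sch par ->
  QX sch par X = [seq sch a | a <- enum A & below sch par X a].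
Proof.
move=> Hh hVO; rewrite /QX; set s := [seq _ | _ <- _ & ancs par X _].
suff -> : flatten s = [::] by rewrite cats0.
rewrite /s; elim: (enum V) => [|y l IH] //=; case: ifP => //= _.
by rewrite ind_nil.
Qed.

Local Open Scope ring_scope.

Definition coverF (R : realType) (V : finType) (E : seq {set V}) (F : {set V})
  (lam : nat -> R) : Prop :=
  (forall i, (i < size E)%N -> 0 <= lam i <= 1) /\
  (forall Y, Y \in F -> 1 <= \sum_(i < size E | Y \in nth set0 E i) lam i).

Lemma rho_le (R : realType) (V : finType) (E : seq {set V}) F lam :
  coverF E F lam -> rho_star R E F <= \sum_(i < size E) lam i.
Proof.
case=> hb hc; apply: ge_inf; last by exists lam; split.
exists 0 => r [l [lb _ ->]]; apply: sumr_ge0 => i _.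
by have /andP[] := lb i (ltn_ord i).
Qed.

Lemma rho_ge (R : realType) (V : finType) (E : seq {set V}) F (x : R) (lam0 : nat -> R) :
  coverF E F lam0 ->
  (forall lam : nat -> R, coverF E F lam -> x <= \sum_(i < size E) lam i) ->
  x <= rho_star R E F.
Proof.
move=> [h0 h1] H; apply: lb_le_inf; first by exists (\sum_(i < size E) lam0 i), lam0.
by move=> r [l [lb lc ->]]; apply: H.
Qed.

Definition feasF (V : finType) (E : seq {set V}) (F : {set V}) : Prop :=
  forall Y, Y \in F -> exists i, (i < size E)%N /\ Y \in nth set0 E i.

Lemma feas_cover (R : realType) (V : finType) (E : seq {set V}) F :
  feasF E F -> coverF E F (fun _ => 1 : R).
Proof.
move=> hf; split; first by move=> i _; rewrite ler01 lexx.
move=> Y /hf [i [hi hY]].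
rewrite (bigD1 (Ordinal hi)) //= lerDl; exact: sumr_ge0.
Qed.

Lemma rho_mono (R : realType) (V : finType) (E : seq {set V}) (F F' : {set V}) :
  feasF E F -> F' \subset F -> rho_star R E F' <= rho_star R E F.
Proof.
move=> hf sub; apply: (rho_ge (feas_cover R hf)) => lam [hb hc].
apply: rho_le; split => // Y YF'; apply: hc; exact: (subsetP sub).
Qed.

Lemma rho_plus1 (R : realType) (V : finType) (E : seq {set V}) (F : {set V}) i0 :
  feasF E F -> (i0 < size E)%N ->
  rho_star R E F <= rho_star R E (F :\: nth set0 E i0) + 1.
Proof.
move=> hf hi0; rewrite -lerBlDr.
have hf' : feasF E (F :\: nth set0 E i0).
  by move=> Y; rewrite inE => /andP[_ /hf].
apply: (rho_ge (feas_cover R hf')) => lam [hb hc].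
set lam' := fun m => if m == i0 then 1 else lam m.
have hb' : forall i, (i < size E)%N -> 0 <= lam' i <= 1.
  by move=> i hi; rewrite /lam'; case: eqP => _; [rewrite ler01 lexx|apply: hb].
rewrite lerBlDr; apply: (le_trans (rho_le (lam := lam') _)).
  split => // Y YF.
  case: (boolP (Y \in nth set0 E i0)) => hY.
    rewrite (bigD1 (Ordinal hi0)) //= {1}/lam' eqxx lerDl.
    by apply: sumr_ge0 => i _; have /andP[] := hb' i (ltn_ord i).
  have := hc Y; rewrite inE hY YF => /(_ isT) h1; apply: (le_trans h1).
  rewrite le_eqVlt; apply/orP; left; apply/eqP; apply: eq_bigr => i hYi.
  rewrite /lam'; case: eqP => // ei; by move: hYi; rewrite ei (negbTE hY).
rewrite (bigD1 (Ordinal hi0)) //= [X in _ <= X + _](bigD1 (Ordinal hi0)) //=.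
rewrite /lam' eqxx addrC lerD2r.
have -> : \sum_(i < size E | i != Ordinal hi0) (if val i == i0 then 1 else lam i)
        = \sum_(i < size E | i != Ordinal hi0) lam i.
  apply: eq_bigr => i hne; case: (nat_of_ord i =P i0) => // ei; exfalso.
  by move/eqP: hne; apply; apply: val_inj; exact: ei.
by rewrite lerDr; have /andP[] := hb i0 hi0.
Qed.
Definition rowE (V : finType) (E : seq {set V}) (Y : V) : {set 'I_(size E)} :=
  [set i : 'I_(size E) | Y \in nth set0 E i].

Definition laminarF (V : finType) (E : seq {set V}) (F : {set V}) : Prop :=
  forall Y Y', Y \in F -> Y' \in F ->
    rowE E Y \subset rowE E Y' \/ rowE E Y' \subset rowE E Y \/
    [disjoint rowE E Y & rowE E Y'].

Lemma rho_nat (R : realType) (V : finType) (E : seq {set V}) (F : {set V}) :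
  feasF E F -> laminarF E F -> exists k : nat, rho_star R E F = k%:R.
Proof.
move=> hf hl.
set n := size E.
set T := [set Y in F | [forall Y' in F, (rowE E Y' \subset rowE E Y) ==> (rowE E Y \subset rowE E Y')]].
set minr := fun Y (i : 'I_n) => (i \in rowE E Y) && [forall j in rowE E Y, (nat_of_ord i <= nat_of_ord j)%N].
set I := [set i | [exists Y in T, minr Y i]].
have f1 : forall Y, Y \in F -> exists2 Y', Y' \in T & rowE E Y' \subset rowE E Y.
  move=> Y YF.
  have hY : Y \in [set Y' in F | rowE E Y' \subset rowE E Y] by rewrite inE YF subxx.
  case: (@arg_minnP _ Y (mem [set Y' in F | rowE E Y' \subset rowE E Y]) (fun Y' => #|rowE E Y'|) hY)
    => Y' hY' Ymin.
  have : Y' \in [set Y' in F | rowE E Y' \subset rowE E Y] by []. rewrite inE => /andP [Y'F sub].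
  exists Y' => //; rewrite inE Y'F /=; apply/forallP => Z; apply/implyP => ZF; apply/implyP => sZ.
  have hZ : Z \in [set Y' in F | rowE E Y' \subset rowE E Y] by rewrite inE ZF (subset_trans sZ sub).
  have := Ymin Z hZ => hc.
  by have /eqP -> : rowE E Z == rowE E Y' by rewrite eqEcard sZ hc.
have f2 : forall Y, Y \in F -> exists i, minr Y i.
  move=> Y /hf [i [hi hY]].
  have hr : Ordinal hi \in rowE E Y by rewrite inE.
  case: (@arg_minnP _ (Ordinal hi) (mem (rowE E Y)) (fun j : 'I_n => nat_of_ord j) hr) => j hj jmin.
  exists j; rewrite /minr; have -> : j \in rowE E Y by []. rewrite /=; apply/forallP => j'; apply/implyP => hj'; exact: jmin.
have TF : forall Y, Y \in T -> Y \in F by move=> Y; rewrite inE => /andP[].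
have f3 : forall Y Y' i i' j, Y \in T -> Y' \in T -> minr Y i -> minr Y' i' ->
    j \in rowE E Y -> j \in rowE E Y' -> i = i'.
  move=> Y Y' i i' j YT Y'T mi mi' jY jY'.
  have eqr : rowE E Y = rowE E Y'.
    have hT : forall Z Z', Z \in T -> Z' \in F -> rowE E Z' \subset rowE E Z -> rowE E Z = rowE E Z'.
      move=> Z Z' ZT Z'F s; move: ZT; rewrite inE => /andP [_ /forallP/(_ Z')].
      by rewrite Z'F s /= => s'; apply/eqP; rewrite eqEsubset s s'.
    case: (hl Y Y' (TF _ YT) (TF _ Y'T)) => [s|[s|d]].
    - by rewrite (hT Y' Y Y'T (TF _ YT) s).
    - exact: (hT Y Y' YT (TF _ Y'T) s).
    - by move: d; rewrite -setI_eq0 => /eqP/setP/(_ j); rewrite inE jY jY' inE.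
  move: mi mi'; rewrite /minr eqr => /andP [ii /forallP hi] /andP [ii' /forallP hi'].
  apply: val_inj; apply/eqP; rewrite eqn_leq.
  by move: (hi i') (hi' i); rewrite ii ii' /= => -> ->.
set lam := fun m : nat => if [exists i in I, nat_of_ord i == m] then (1 : R) else 0.
have lamE : forall i : 'I_n, lam i = if i \in I then 1 else 0.
  move=> i; rewrite /lam; case: ifP => h; case: ifP => h' //.
    move: h => /existsP [i' /andP [i'I /eqP ei]]; move: h'.
    have e2 : i = i' by apply: val_inj => /=; exact: (esym ei).
    by rewrite e2 i'I.
  by move: h => /existsP; case; exists i; rewrite h' eqxx.
have sumlam : \sum_(i < n) lam i = #|I|%:R.
  rewrite (eq_bigr (fun i => if i \in I then 1 else 0)); last by move=> i _; apply: lamE.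
  by rewrite -big_mkcond sumr_const.
have clam : coverF E F lam.
  split.
    move=> i _; rewrite /lam; case: ifP => _; by rewrite ?ler01 ?lexx.
  move=> Y YF; have [Y' Y'T sub] := f1 Y YF.
  have [i mi] := f2 Y' (TF _ Y'T).
  have iI : i \in I by rewrite inE; apply/existsP; exists Y'; rewrite Y'T.
  have iY : Y \in nth set0 E i.
    by move: mi => /andP [/(subsetP sub)]; rewrite inE.
  rewrite (bigD1 i) //= lamE iI lerDl; apply: sumr_ge0 => j _; rewrite lamE.
  by case: ifP.
exists #|I|; apply/eqP; rewrite eq_le; apply/andP; split.
  by rewrite -sumlam; apply: rho_le.
apply: (rho_ge clam) => l [lb lc].
set P := fun (i : 'I_n) (j : 'I_n) => if [pick Y in T | minr Y i] is Some Y then Y \in nth set0 E j else false.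
have step1 : #|I|%:R <= \sum_(i in I) \sum_(j < n | P i j) l j.
  rewrite -sumr_const; apply: ler_sum => i iI.
  rewrite /P; case: pickP => [Y /andP [YT _]|hn].
    exact: lc (TF _ YT).
  by move: iI; rewrite inE => /existsP [Y /andP [YT mY]]; have := hn Y; rewrite YT mY.
apply: (le_trans step1).
rewrite (eq_bigr (fun i => \sum_(j < n) (if P i j then l j else 0))); last by move=> i _; rewrite big_mkcond.
rewrite exchange_big /=; apply: ler_sum => j _.
rewrite -big_mkcondr.
rewrite (eq_bigl (fun i => i \in [set i in I | P i j])); last by move=> i; rewrite !inE.
rewrite sumr_const.
have hP : forall k, P k j -> exists Y, [/\ Y \in T, minr Y k & Y \in nth set0 E j].
  move=> k; rewrite /P; case: pickP => [Y /andP [YT mY] hY|//]; by exists Y.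
have hc : (#|[set i in I | P i j]| <= 1)%N.
  apply/card_le1_eqP => i i'; rewrite !inE => /andP [iI /hP [Y [YT mY hY]]] /andP [i'I /hP [Y' [Y'T mY' hY']]].
  by apply: esym; apply: (f3 Y Y' i i' j YT Y'T mY mY'); rewrite inE.
have l0 : 0 <= l j by have /andP[] := lb j (ltn_ord j).
move: hc; case: #|_| => [|[|//]] _; by rewrite ?mulr0n ?mulr1n.
Qed.
Lemma nth_map_ex (V A : finType) (sch : A -> {set V}) (s : seq A) i :
  (i < size (map sch s))%N -> exists a, nth set0 (map sch s) i = sch a.
Proof.
elim: s i => [|a s IH] [|i] //= h; first by exists a.
exact: IH.
Qed.

Lemma lam_map (V A : finType) (sch : A -> {set V}) (L : seq A) (F : {set V}) :
  hierarchical sch -> laminarF (map sch L) F.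
Proof.
move=> Hh Y Y' _ _.
have key : forall Z Z', atoms_of sch Z \subset atoms_of sch Z' ->
    rowE (map sch L) Z \subset rowE (map sch L) Z'.
  move=> Z Z' s; apply/subsetP => i; rewrite !inE.
  have [a ->] := nth_map_ex (ltn_ord i).
  by move=> hZ; move/subsetP: s => /(_ a); rewrite !inE; apply.
case: (Hh Y Y') => [s|[s|d]]; [left|right;left|right;right].
- exact: key.
- exact: key.
rewrite -setI_eq0; apply/eqP/setP => i; rewrite !inE.
have [a ->] := nth_map_ex (ltn_ord i).
by move: d; rewrite -setI_eq0 => /eqP/setP/(_ a); rewrite !inE.
Qed.

Lemma feas_QX (V A : finType) (sch : A -> {set V}) (par : V -> option V) X :
  hierarchical sch -> is_VO sch par -> X \in qvars sch ->
  feasF (QX sch par X) (X |: dep sch par X).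
Proof.
move=> Hh hVO Xq Y YS; rewrite (QX_eq _ Hh hVO).
set E := map sch _.
suff [b [bb Yb]] : exists b, below sch par X b /\ Y \in sch b.
  have bE : sch b \in E by apply: map_f; rewrite mem_filter bb mem_enum.
  by exists (index (sch b) E); rewrite index_mem nth_index.
move: YS; rewrite in_setU1 => /orP [/eqP ->|].
  move: Xq => /bigcupP [a _ Xa]; exists a; split => //.
  by apply: (below_of hVO Xa); rewrite /ancs eqxx.
rewrite inE => /andP [_ /existsP [b /andP [Yb /existsP [Z /andP [Zb XZ]]]]].
by exists b; split => //; apply: (below_of hVO Zb XZ).
Qed.
Lemma le_bigmax_gen (R : realType) (I : eqType) (s : seq I) (P : pred I) (f : I -> R) x :
  x \in s -> P x -> f x <= \big[Num.max/0]_(i <- s | P i) f i.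
Proof.
elim: s => [|a s IH] //; rewrite in_cons big_cons => /orP [/eqP <-|xs] Px.
  by rewrite Px le_max lexx.
by case: ifP => _; rewrite ?le_max IH ?orbT.
Qed.

Lemma max_nat (R : realType) (x y : R) :
  (exists k : nat, x = k%:R) -> (exists k : nat, y = k%:R) ->
  exists k : nat, Num.max x y = k%:R.
Proof. by move=> [k ->] [m ->]; rewrite maxEle; case: ifP => _; [exists m|exists k]. Qed.

Lemma max_ge0 (R : realType) (x y : R) : 0 <= x -> 0 <= y -> 0 <= Num.max x y.
Proof. by move=> hx hy; rewrite le_max hx. Qed.

Lemma max_le (R : realType) (x y z : R) : x <= z -> y <= z -> Num.max x y <= z.
Proof. by move=> hx hy; rewrite ge_max hx hy. Qed.

Lemma rho_X_nat (R : realType) (V A : finType) (sch : A -> {set V}) (par : V -> option V) X (F : {set V}) :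
  hierarchical sch -> is_VO sch par -> X \in qvars sch ->
  F \subset X |: dep sch par X ->
  exists k : nat, rho_star R (QX sch par X) F = k%:R.
Proof.
move=> Hh hVO Xq sub; apply: rho_nat.
  by move=> Y YF; apply: (feas_QX Hh hVO Xq); apply: (subsetP sub).
rewrite (QX_eq _ Hh hVO); exact: lam_map.
Qed.

Lemma VO_bounds (R : realType) (V A : finType) (sch : A -> {set V}) (par : V -> option V) :
  hierarchical sch -> is_VO sch par ->
  [/\ exists k : nat, deltaVO R sch par = k%:R,
      exists k : nat, wVO R sch par = k%:R,
      deltaVO R sch par <= wVO R sch par &
      wVO R sch par <= deltaVO R sch par + 1].
Proof.
move=> Hh hVO.
have d0 : 0 <= deltaVO R sch par.
  apply: (big_ind (fun x : R => 0 <= x)) => //; first exact: max_ge0.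
  move=> X Xq; apply: (big_ind (fun x : R => 0 <= x)) => //; first exact: max_ge0.
  move=> e _; have [k ->] := rho_X_nat R Hh hVO Xq (subsetDl _ e).
  exact: ler0n.
have w0 : 0 <= wVO R sch par.
  apply: (big_ind (fun x : R => 0 <= x)) => //; first exact: max_ge0.
  move=> X Xq; have [k ->] := rho_X_nat R Hh hVO Xq (subxx _).
  exact: ler0n.
split.
- apply: (big_ind (fun x : R => exists k : nat, x = k%:R)); first by exists 0%N.
    exact: max_nat.
  move=> X Xq; apply: (big_ind (fun x : R => exists k : nat, x = k%:R)); first by exists 0%N.
    exact: max_nat.
  move=> e _; apply: (rho_X_nat R Hh hVO Xq); exact: subsetDl.
- apply: (big_ind (fun x : R => exists k : nat, x = k%:R)); first by exists 0%N.
    exact: max_nat.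
  move=> X Xq; exact: (rho_X_nat R Hh hVO Xq (subxx _)).
- apply: (big_ind (fun x : R => x <= wVO R sch par)); [exact: w0 | by move=> x y hx hy; rewrite ge_max hx hy | ].
  move=> X Xq; apply: (big_ind (fun x : R => x <= wVO R sch par)); [exact: w0 | by move=> x y hx hy; rewrite ge_max hx hy | ].
  move=> e _; apply: le_trans (rho_mono _ _ (subsetDl _ e)) _.
    exact: feas_QX.
  exact: (le_bigmax_gen (P := fun X => X \in qvars sch) (fun X => rho_star R (QX sch par X) (X |: dep sch par X))) (mem_index_enum X) Xq.
- apply: (big_ind (fun x : R => x <= deltaVO R sch par + 1)).
    by rewrite -[0]addr0 lerD ?d0 // ler01.
    by move=> x y hx hy; rewrite ge_max hx hy.
  move=> X Xq.
  have hf := feas_QX Hh hVO Xq.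
  have [i0 [hi0 _]] := hf X (setU11 _ _).
  apply: le_trans (rho_plus1 R hf hi0) _; rewrite lerD2r.
  apply: le_trans (le_bigmax_gen (s := QX sch par X) (P := predT)
     (fun e => rho_star R (QX sch par X) ((X |: dep sch par X) :\: e)) (mem_nth set0 hi0) isT) _.
  exact: (le_bigmax_gen (P := fun X => X \in qvars sch) (fun X => \big[Num.max/0]_(e <- QX sch par X) rho_star R (QX sch par X) ((X |: dep sch par X) :\: e))) (mem_index_enum X) Xq.
Qed.
Theorem proposition3p8 (R : realType) (V A : finType) (sch : A -> {set V})
  (kind : V -> vkind) (d w : R) :
  hierarchical (fr_sch sch kind) ->
  cqap_widths sch kind d w ->
  d = w \/ d = w - 1.
Proof.
move=> Hh [[par [hVO _ hd hw]] _].
have [[k hk] [m hm] hdw hwd] := VO_bounds R Hh hVO.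
rewrite hd in hk; rewrite hw in hm; subst d w.
rewrite hk hm in hdw hwd *.
move: hdw hwd; rewrite ler_nat natr1 ler_nat => h1 h2.
have [->|hlt] := eqVneq k m; first by left.
right; have -> : m = k.+1 by lia.
by rewrite -natr1 addrK.
Qed.
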